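(* Let $x_i,x_j:[0,\infty)\to\mathbb{S}^2$ and $v_i,v_j:[0,\infty)\to\mathbb{R}^3$, with $v_i$ and $v_j$ uniformly bounded in time. For $k>0$ let $$f_k(t):=\|x_i(t)+x_j(t)\|\,\big\|R(x_j(t),x_i(t))v_j(t)-v_i(t)\big\|^k,$$ with $f_k(t):=0$ whenever $x_i(t)=-x_j(t)$. Then the conditions $\lim_{t\to\infty}f_k(t)=0$ are equivalent for all $k>0$ (i.e. if it holds for one $k>0$, it holds for every $k>0$).
   Context: $\mathbb{S}^2$ is the unit sphere in $\mathbb{R}^3$ and $\|\cdot\|$ the Euclidean norm. For column vectors $x_1,x_2\in\mathbb{S}^2$ with $x_1\ne-x_2$, $R(x_1,x_2)=I$ if $x_1=x_2$, and otherwise $$R(x_1,x_2)=\langle x_1,x_2\rangle I-x_1x_2^T+x_2x_1^T+(1-\langle x_1,x_2\rangle)\Big(\frac{x_1\times x_2}{\|x_1\times x_2\|}\Big)\Big(\frac{x_1\times x_2}{\|x_1\times x_2\|}\Big)^T.$$ *)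

(* Defs.v *)
From HB Require Import structures.
From mathcomp Require Import all_boot all_order all_algebra.
From mathcomp Require Import all_classical all_reals all_analysis.
Set Implicit Arguments. Unset Strict Implicit. Unset Printing Implicit Defensive.
Import Order.TTheory GRing.Theory Num.Theory.
Local Open Scope ring_scope.

Section Defs.
Variable R : realType.

Definition dot3 (x y : 'cV[R]_3) : R := (x^T *m y) 0 0.

Definition norm3 (x : 'cV[R]_3) : R := Num.sqrt (dot3 x x).

Definition on_sphere (x : 'cV[R]_3) : Prop := norm3 x = 1.

Definition cross3 (x y : 'cV[R]_3) : 'cV[R]_3 :=
  \col_(i < 3)
    (if i == 0 :> nat then x 1 0 * y 2%:R 0 - x 2%:R 0 * y 1 0
     else if i == 1 :> nat then x 2%:R 0 * y 0 0 - x 0 0 * y 2%:R 0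
     else x 0 0 * y 1 0 - x 1 0 * y 0 0).

(* The matrix R(x1,x2) of the paper (only meaningful for x1 <> -x2). *)
Definition Rmat (x1 x2 : 'cV[R]_3) : 'M[R]_3 :=
  if x1 == x2 then 1%:M
  else
    let n := (norm3 (cross3 x1 x2))^-1 *: cross3 x1 x2 in
    (dot3 x1 x2)%:M - x1 *m x2^T + x2 *m x1^T + (1 - dot3 x1 x2) *: (n *m n^T).

Definition fk (k : R) (xi xj vi vj : R -> 'cV[R]_3) (t : R) : R :=
  if xi t == - xj t then 0
  else norm3 (xi t + xj t) * powR (norm3 (Rmat (xj t) (xi t) *m vj t - vi t)) k.

End Defs.

(* Main.v *)
Require Import Defs.
From HB Require Import structures.
From mathcomp Require Import all_boot all_order all_algebra.
From mathcomp Require Import all_classical all_reals all_analysis.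
From mathcomp Require Import ring lra.
Import Order.TTheory GRing.Theory Num.Theory.
Import numFieldNormedType.Exports.
Local Open Scope classical_set_scope.
Local Open Scope ring_scope.

Section G.
Variable R : realType.
Implicit Types x y v w : 'cV[R]_3.

Lemma dot3E x y : dot3 x y = x 0 0 * y 0 0 + x 1 0 * y 1 0 + x 2%:R 0 * y 2%:R 0.
Proof.
rewrite /dot3 !mxE !big_ord_recr big_ord0 /= !mxE add0r.
rewrite (_ : widen_ord _ (widen_ord _ _) = 0 :> 'I_3); last by apply/val_inj.
rewrite (_ : widen_ord _ ord_max = 1 :> 'I_3); last by apply/val_inj.
by rewrite (_ : ord_max = 2%:R :> 'I_3); last by apply/val_inj.
Qed.

Lemma ord3_cases (i : 'I_3) : i = 0 \/ i = 1 \/ i = 2%:R.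
Proof.
case: i => [[|[|[|n]]] hi]; [left|right;left|right;right|]; try by apply/val_inj.
by [].
Qed.

Lemma norm3_ge0 x : 0 <= norm3 x.
Proof. exact: sqrtr_ge0. Qed.

Lemma coord_le x (i : 'I_3) : `|x i 0| <= norm3 x.
Proof.
rewrite /norm3 dot3E -sqrtr_sqr ler_sqrt; last first.
  by rewrite -!expr2 !addr_ge0 // sqr_ge0.
by case: (ord3_cases i) => [->|[->|->]]; rewrite -!expr2; (have := sqr_ge0 (x 0 0); have := sqr_ge0 (x 1 0); have := sqr_ge0 (x 2%:R 0); lra).
Qed.

Lemma norm3_le x : norm3 x <= `|x 0 0| + `|x 1 0| + `|x 2%:R 0|.
Proof.
have s0 : 0 <= `|x 0 0| + `|x 1 0| + `|x 2%:R 0| by rewrite !addr_ge0.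
rewrite -(ger0_norm s0) -sqrtr_sqr /norm3 ler_sqrt ?sqr_ge0 // dot3E -!expr2.
rewrite -(real_normK (num_real (x 0 0))) -(real_normK (num_real (x 1 0))).
rewrite -(real_normK (num_real (x 2%:R 0))).
have := normr_ge0 (x 0 0); have := normr_ge0 (x 1 0); have := normr_ge0 (x 2%:R 0).
set a := `|x 0 0|; set b := `|x 1 0|; set c := `|x 2%:R 0|.
move=> ? ? ?; nra.
Qed.

Lemma mulmx_entry_le (M : 'M[R]_3) v (i : 'I_3) C N :
  (forall j k, `|M j k| <= C) -> (forall j, `|v j 0| <= N) ->
  `|(M *m v) i 0| <= (C * N) *+ 3.
Proof.
move=> hM hv; rewrite mxE; apply: le_trans (ler_norm_sum _ _ _) _.
have -> : (C * N) *+ 3 = \sum_(j < 3) (C * N) by rewrite sumr_const card_ord.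
apply: ler_sum => j _; rewrite normrM; apply: ler_pM => //.
Qed.

Lemma Rform_bound (c : R) (x1 x2 n : 'cV[R]_3) (i j : 'I_3) :
  `|c| <= 3 -> (forall k, `|x1 k 0| <= 1) -> (forall k, `|x2 k 0| <= 1) ->
  (forall k, `|n k 0| <= 1) ->
  `|(c%:M - x1 *m x2^T + x2 *m x1^T + (1 - c) *: (n *m n^T)) i j| <= 9.
Proof.
move=> hc h1 h2 hn; rewrite !mxE !big_ord1 !mxE.
have P : forall (u w : 'cV[R]_3) a b, (forall k, `|u k 0| <= 1) -> (forall k, `|w k 0| <= 1) ->
   `|u a ord0 * w b ord0| <= 1.
  move=> u w a b hu hw; rewrite normrM -[1](mulr1 1); apply: ler_pM => //.
have d : `|c *+ (i == j)| <= 3.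
  by case: (i == j); rewrite ?mulr1n ?mulr0n ?normr0.
have := P _ _ i j h1 h2; have := P _ _ i j h2 h1; have := P _ _ i j hn hn.
have e : `|1 - c| <= 4 by apply: le_trans (ler_normB _ _) _; rewrite normr1; lra.
move: (n i ord0 * n j ord0) => q hq.
have hq' : `|(1 - c) * q| <= 4 by rewrite normrM -[4](mulr1 4); apply: ler_pM.
move=> h3 h4.
apply: le_trans (ler_normD _ _) _; rewrite (_ : 9 = 5 + 4) //; [|lra].
apply: lerD => //.
apply: le_trans (ler_normD _ _) _; rewrite (_ : 5 = 4 + 1); [|lra].
apply: lerD => //.
apply: le_trans (ler_normB _ _) _; lra.
Qed.

Lemma Rmat_bound x1 x2 (i j : 'I_3) :
  (forall k, `|x1 k 0| <= 1) -> (forall k, `|x2 k 0| <= 1) -> `|Rmat x1 x2 i j| <= 9.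
Proof.
move=> h1 h2; rewrite /Rmat; case: ifP => _.
  by rewrite mxE; case: (i == j); rewrite ?mulr1n ?mulr0n ?normr1 ?normr0; lra.
apply: Rform_bound => //.
  rewrite dot3E.
  have P : forall a b : 'I_3, `|x1 a 0 * x2 b 0| <= 1.
    by move=> a b; rewrite normrM -[1](mulr1 1); apply: ler_pM.
  have := P 0 0; have := P 1 1; have := P 2%:R 2%:R.
  move: (x1 0 0 * x2 0 0) (x1 1 0 * x2 1 0) (x1 2%:R 0 * x2 2%:R 0) => a b c ha hb hc.
  apply: le_trans (ler_normD _ _) _; rewrite (_ : 3 = 2 + 1); [|lra].
  apply: lerD => //; apply: le_trans (ler_normD _ _) _; lra.
move=> k; rewrite mxE normrM normfV (ger0_norm (norm3_ge0 _)).
set s := norm3 _.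
have [->|s0] := eqVneq s 0; first by rewrite invr0 mul0r.
have sp : 0 < s by rewrite lt_def s0 norm3_ge0.
by rewrite mulrC ler_pdivrMr // mul1r coord_le.
Qed.

Lemma Rv_bound x1 x2 v w Mv Mw :
  (forall k, `|x1 k 0| <= 1) -> (forall k, `|x2 k 0| <= 1) ->
  norm3 v <= Mv -> norm3 w <= Mw ->
  norm3 (Rmat x1 x2 *m v - w) <= (9 * Mv *+ 3 + Mw) *+ 3.
Proof.
move=> h1 h2 hv hw.
have hu : forall k, `|(Rmat x1 x2 *m v) k 0| <= (9 * Mv) *+ 3.
  move=> k; apply: mulmx_entry_le => j *; first exact: Rmat_bound.
  exact: le_trans (coord_le _ _) hv.
move: (Rmat x1 x2 *m v) hu => u hu.
have hk : forall k, `|(u - w) k 0| <= 9 * Mv *+ 3 + Mw.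
  move=> k; rewrite !mxE; apply: le_trans (ler_normB _ _) _.
  by apply: lerD => //; exact: le_trans (coord_le _ _) hw.
apply: le_trans (norm3_le _) _.
have := hk 0; have := hk 1; have := hk 2%:R.
move: (9 * Mv *+ 3 + Mw) => K; rewrite !mulrS mulr0n addr0; lra.
Qed.

Lemma sum_bound x1 x2 :
  (forall k, `|x1 k 0| <= 1) -> (forall k, `|x2 k 0| <= 1) -> norm3 (x1 + x2) <= 6.
Proof.
move=> h1 h2.
have hk : forall k, `|(x1 + x2) k 0| <= 2.
  move=> k; rewrite !mxE; apply: le_trans (ler_normD _ _) _.
  by rewrite (_ : 2 = 1 + 1) //; apply: lerD.
apply: le_trans (norm3_le _) _.
have := hk 0; have := hk 1; have := hk 2%:R; lra.
Qed.

Lemma sphere_coord x k : on_sphere x -> `|x k 0| <= 1.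
Proof. by move=> h; rewrite -h coord_le. Qed.
Definition delta (A B k1 k2 eps : R) : R :=
  if k1 <= k2 then eps / (B `^ (k2 - k1) + 1)
  else eps `^ (k1 / k2) / A `^ (k1 / k2 - 1).

Lemma delta_gt0 A B k1 k2 eps : 0 < A -> 0 < eps -> 0 < delta A B k1 k2 eps.
Proof.
move=> A0 e0; rewrite /delta; case: ifP => _.
  by apply: divr_gt0 => //; apply: ltr_wpDl; [exact: powR_ge0|].
by apply: divr_gt0; apply: powR_gt0.
Qed.

Lemma key (a A b B k1 k2 eps : R) : 0 < A -> 0 < k1 -> 0 < k2 -> 0 < eps ->
  0 <= a <= A -> 0 <= b <= B ->
  a * b `^ k1 <= delta A B k1 k2 eps -> a * b `^ k2 <= eps.
Proof.
move=> A0 k10 k20 e0 /andP[a0 aA] /andP[b0 bB]; rewrite /delta; case: ifP => hk h.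
  have -> : b `^ k2 = b `^ k1 * b `^ (k2 - k1).
    rewrite -powRD; first by congr (_ `^ _); ring.
    by apply/implyP => /eqP H; exfalso; move: k20; rewrite -H; lra.
  have hB : b `^ (k2 - k1) <= B `^ (k2 - k1).
    by apply: ge0_ler_powR; rewrite ?nnegrE ?subr_ge0 //; lra.
  have p0 := powR_ge0 b k1; have q0 := powR_ge0 b (k2 - k1).
  have d0 : 0 < B `^ (k2 - k1) + 1 by apply: ltr_wpDl; [exact: powR_ge0|].
  move: h; rewrite ler_pdivlMr // => h.
  apply: le_trans (h); rewrite mulrA; apply: ler_pM; rewrite ?mulr_ge0 //; lra.
set p := k1 / k2.
have p1 : 1 < p by rewrite /p ltr_pdivlMr // mul1r; rewrite ltNge hk.
have ab0 : 0 <= a * b `^ k2 by rewrite mulr_ge0 // powR_ge0.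
rewrite leNgt; apply/negP => lt.
have := gt0_ltr_powR (lt_trans ltr01 p1) (ltW e0) ab0 lt.
rewrite powRM // ?powR_ge0 // -powRrM (_ : k2 * p = k1); last by rewrite /p mulrC divfK // gt_eqF.
move=> H.
rewrite -(mulr_powRB1 a0 (lt_trans ltr01 p1)) in H.
have h2 : a `^ (p - 1) <= A `^ (p - 1).
  by apply: ge0_ler_powR; rewrite ?nnegrE ?subr_ge0 //; lra.
have t0 : 0 < A `^ (p - 1) by apply: powR_gt0.
move: h; rewrite -/p ler_pdivlMr // => h.
have p0 := powR_ge0 b k1; have q0 := powR_ge0 a (p - 1).
have : a * a `^ (p - 1) * b `^ k1 <= a * b `^ k1 * A `^ (p - 1).
  rewrite mulrAC; apply: ler_pM; rewrite ?mulr_ge0 //.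
lra.
Qed.
End G.

Theorem lemmaC1 (R : realType) (xi xj vi vj : R -> 'cV[R]_3)
  (hxi : forall t : R, 0 <= t -> on_sphere (xi t))
  (hxj : forall t : R, 0 <= t -> on_sphere (xj t))
  (hvi : exists M : R, forall t : R, 0 <= t -> norm3 (vi t) <= M)
  (hvj : exists M : R, forall t : R, 0 <= t -> norm3 (vj t) <= M)
  (k1 k2 : R) (hk1 : 0 < k1) (hk2 : 0 < k2) :
  (fk k1 xi xj vi vj t @[t --> +oo] --> 0) ->
  (fk k2 xi xj vi vj t @[t --> +oo] --> 0).
Proof.
case: hvi => Mi hMi; case: hvj => Mj hMj.
set B := (9 * Mj *+ 3 + Mi) *+ 3.
move=> /cvgr0Pnorm_le H; apply/cvgr0Pnorm_le => eps e0.
have A0 : (0 : R) < 6 by [].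
have H1 := H _ (@delta_gt0 R 6 B k1 k2 eps A0 e0).
near=> t.
have t0 : 0 <= t by near: t; apply: nbhs_pinfty_ge; rewrite num_real.
have Ht : `|fk k1 xi xj vi vj t| <= delta R 6 B k1 k2 eps by near: t; exact: H1.
move: Ht; rewrite /fk; case: ifP => _; first by rewrite normr0 => _; apply: ltW.
have hi := fun k => @sphere_coord R _ k (hxi t t0).
have hj := fun k => @sphere_coord R _ k (hxj t t0).
have a0 := @norm3_ge0 R (xi t + xj t).
have b0 := @norm3_ge0 R (Rmat (xj t) (xi t) *m vj t - vi t).
rewrite !ger0_norm ?mulr_ge0 ?powR_ge0 //.
apply: key => //.
  by rewrite a0 /=; apply: sum_bound.
by rewrite b0 /=; apply: Rv_bound => //; [apply: hMj | apply: hMi].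
Unshelve. all: end_near.
Qed.
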